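(* Consider the quantum walk on the half line induced by the birth–death chain with parameters $(p_j,q_j,r_j)_{j\ge0}$, and assume the chain is positive recurrent, i.e. $C_R<\infty$. Define $$\pi(j)=\frac{1}{1+C_R}\Big\{\delta_0(j)+(1-\delta_0(j))\frac{p_0\cdots p_{j-1}}{q_1\cdots q_j}\Big\},\quad j\ge0.$$ Then for every $j\ge0$ and every unit vector $\Psi_0=\sum_{k\ge0:|k-j|\le1}\alpha_k\delta_{(k,j)}\in\ell^2(A)$, and every $i\ge0$, $$\overline{\mu}^{(\Psi_0)}_\infty(i)\ \ge\ |\langle a_j,\Psi_0\rangle|^2\,\pi(i)\,\pi(j).$$ In particular, for $\Psi_0=a_j$ one has $\overline{\mu}^{(\Psi_0)}_\infty(i)>0$ for all $i$ (localization).
   Context: Half-line setting: $V=\mathbb{Z}_+=\{0,1,2,\dots\}$, with parameters $p_j,q_j,r_j\ge0$, $p_j+q_j+r_j=1$, $q_0=0$, $p_j>0$ for $j\ge0$, $q_j>0$ for $j\ge1$; from $j$ the walker moves to $j+1$, $j-1$, $j$ with probabilities $p_j,q_j,r_j$. The arc set $A$ consists of $(j+1,j)$ for $j\ge0$ (denoted $|j;R\rangle$), $(j-1,j)$ for $j\ge1$ (denoted $|j;L\rangle$), and the self loop arc $(j,j)$ whenever $r_j>0$ (denoted $|j;O\rangle$); arc $(u,v)$ goes from $v$ to $u$. The shift $S$ on $\ell^2(A)$ swaps $\delta_{(u,v)}\leftrightarrow\delta_{(v,u)}$, i.e. $|j;R\rangle\leftrightarrow|j+1;L\rangle$ and fixes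 $|j;O\rangle$. $a_j=\sqrt{q_j}|j;L\rangle+\sqrt{r_j}|j;O\rangle+\sqrt{p_j}|j;R\rangle$ (terms with zero coefficient omitted). $\Pi_A$ is the orthogonal projection onto the closed span of $\{a_j\}$, $C=2\Pi_A-I$, $U=SC$. For a unit $\Psi_0\in\ell^2(A)$, $P(X_t=i)=\sum_{J}|\langle i;J|U^t\Psi_0\rangle|^2$ (sum over the arcs out of $i$) and $\overline{\mu}^{(\Psi_0)}_\infty(i)=\lim_{T\to\infty}\frac1T\sum_{t=0}^{T-1}P(X_t=i)$. $C_R=\sum_{j\ge1}\frac{p_0\cdots p_{j-1}}{q_1\cdots q_j}$. *)

(* Defs.v *)
From Stdlib Require Import Reals.
Open Scope R_scope.

Record Cx := mkCx { Cre : R; Cim : R }.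
Definition C0 : Cx := mkCx 0 0.
Definition Cadd (z w : Cx) : Cx := mkCx (Cre z + Cre w) (Cim z + Cim w).
Definition Csub (z w : Cx) : Cx := mkCx (Cre z - Cre w) (Cim z - Cim w).
Definition Cscal (a : R) (z : Cx) : Cx := mkCx (a * Cre z) (a * Cim z).
Definition Cnorm2 (z : Cx) : R := Cre z * Cre z + Cim z * Cim z.

(* Arcs out of vertex j : |j;L> = (j-1,j), |j;O> = (j,j), |j;R> = (j+1,j). *)
Inductive Dir := DL | DO | DR.

(* A vector of l^2(A): Psi j d = <j;d|Psi>.  Entries on non-existent arcs
   (|0;L>, and |j;O> when r_j = 0) are kept equal to 0. *)
Definition vec := nat -> Dir -> Cx.

Section Walk.
Variables p q r : nat -> R.

(* coefficient of a_j on |j;d> *)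
Definition amp (j : nat) (d : Dir) : R :=
  match d with DL => sqrt (q j) | DO => sqrt (r j) | DR => sqrt (p j) end.

Definition avec (j : nat) : vec :=
  fun k d => if Nat.eqb k j then mkCx (amp j d) 0 else C0.

(* <a_j, Psi> (a_j is real, so no conjugation is needed on it) *)
Definition inner_a (j : nat) (Psi : vec) : Cx :=
  Cadd (Cscal (amp j DL) (Psi j DL))
       (Cadd (Cscal (amp j DO) (Psi j DO)) (Cscal (amp j DR) (Psi j DR))).

(* Pi_A Psi = sum_j <a_j,Psi> a_j  (orthogonal projection onto the closed
   span of the orthonormal family {a_j}, which have disjoint supports) *)
Definition PiA (Psi : vec) : vec :=
  fun j d => Cscal (amp j d) (inner_a j Psi).

Definition Coin (Psi : vec) : vec :=
  fun j d => Csub (Cscal 2 (PiA Psi j d)) (Psi j d).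

Definition Shift (Psi : vec) : vec :=
  fun j d => match d with
             | DR => Psi (S j) DL
             | DL => match j with O => C0 | S k => Psi k DR end
             | DO => Psi j DO
             end.

Definition Uop (Psi : vec) : vec := Shift (Coin Psi).

Fixpoint Upow (t : nat) (Psi : vec) : vec :=
  match t with O => Psi | S t' => Uop (Upow t' Psi) end.

Definition prob (Psi0 : vec) (t i : nat) : R :=
  Cnorm2 (Upow t Psi0 i DL) + Cnorm2 (Upow t Psi0 i DO) + Cnorm2 (Upow t Psi0 i DR).

(* (1/T) sum_{t=0}^{T-1} P(X_t = i), with T = n+1 *)
Definition cesaro (Psi0 : vec) (i : nat) (n : nat) : R :=
  / INR (S n) * sum_f_R0 (fun t => prob Psi0 t i) n.

Fixpoint prodp (j : nat) : R :=
  match j with O => 1 | S k => prodp k * p k end.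
Fixpoint prodq (j : nat) : R :=
  match j with O => 1 | S k => prodq k * q (S k) end.

(* term j+1 of C_R = sum_{j>=1} p_0...p_{j-1}/(q_1...q_j) *)
Definition CR_term (k : nat) : R := prodp (S k) / prodq (S k).

Definition pi_stat (CR : R) (j : nat) : R :=
  / (1 + CR) * (match j with O => 1 | _ => prodp j / prodq j end).

End Walk.

(* Psi0 = alpha_{j-1} |j;L> + alpha_j |j;O> + alpha_{j+1} |j;R> *)
Definition init (j : nat) (bL bO bR : Cx) : vec :=
  fun k d => if Nat.eqb k j then match d with DL => bL | DO => bO | DR => bR end
             else C0.

(* Main.v *)
Require Import Defs.
From Stdlib Require Import Reals Lra Lia List FunctionalExtensionality.
Open Scope R_scope.

Lemma quad_nonneg (a b c : R) :
  0 <= a -> 0 <= c -> (forall l, 0 <= a + 2 * l * b + l * l * c) -> b * b <= a * c.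
Proof.
  intros Ha Hc H.
  destruct (Rle_lt_or_eq_dec 0 c Hc) as [Hc'|Hc'].
  - specialize (H (- b / c)).
    assert (E : a + 2 * (- b / c) * b + (- b / c) * (- b / c) * c = (a * c - b * b) / c)
      by (field; lra).
    rewrite E in H.
    apply Rmult_le_compat_r with (r := c) in H; [|lra].
    unfold Rdiv in H. rewrite Rmult_assoc, Rinv_l, Rmult_1_r in H by lra. lra.
  - subst c. destruct (Req_dec b 0) as [Hb|Hb].
    + subst; lra.
    + specialize (H (- (a + 1) / (2 * b))).
      assert (E : a + 2 * (- (a + 1) / (2 * b)) * b + (- (a + 1) / (2 * b)) * (- (a + 1) / (2 * b)) * 0 = -1)
        by (field; lra).
      lra.
Qed.

Lemma sqrt_le_of (x y : R) : 0 <= y -> x <= y * y -> sqrt x <= y.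
Proof. intros Hy H. rewrite <- (sqrt_square y Hy). apply sqrt_le_1_alt; lra. Qed.

Lemma sqrt_add_sq (a b : R) : 0 <= a -> 0 <= b -> sqrt (a + b * b) <= sqrt a + b.
Proof.
  intros Ha Hb. apply sqrt_le_of. generalize (sqrt_pos a); lra.
  generalize (sqrt_sqrt a Ha) (sqrt_pos a). nra.
Qed.

Definition fv := list (R * nat).
Definition Ev (f : nat -> R) (l : fv) : R :=
  fold_right (fun p acc => fst p * f (snd p) + acc) 0 l.
Definition sc (k : R) (l : fv) : fv := map (fun p => (k * fst p, snd p)) l.
Definition shl (r : nat) (l : fv) : fv := map (fun p => (fst p, (snd p + r)%nat)) l.
Definition opp (l : fv) : fv := sc (-1) l.

Lemma Ev_app f l w : Ev f (l ++ w) = Ev f l + Ev f w.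
Proof. induction l as [|[a s] l IH]; simpl; [lra|]. unfold Ev in *; simpl in *. rewrite IH; lra. Qed.
Lemma Ev_sc f k l : Ev f (sc k l) = k * Ev f l.
Proof. induction l as [|[a s] l IH]; unfold Ev in *; simpl in *; [lra|]. rewrite IH; ring. Qed.
Lemma Ev_opp f l : Ev f (opp l) = - Ev f l.
Proof. unfold opp; rewrite Ev_sc; ring. Qed.
Lemma Ev_shl f r l : Ev f (shl r l) = Ev (fun s => f (s + r)%nat) l.
Proof. induction l as [|[a s] l IH]; unfold Ev in *; simpl in *; [lra|]. rewrite IH; ring. Qed.
Lemma Ev_lin f g a l : Ev (fun s => a * f s + g s) l = a * Ev f l + Ev g l.
Proof. induction l as [|[b s] l IH]; unfold Ev in *; simpl in *; [lra|]. rewrite IH; ring. Qed.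
Lemma Ev_plusf f g l : Ev (fun s => f s + g s) l = Ev f l + Ev g l.
Proof. rewrite <- (Rmult_1_l (Ev f l)), <- Ev_lin. induction l as [|[b s] l IH]; unfold Ev in *; simpl in *; [lra|]. rewrite IH; ring. Qed.
Lemma Ev_ext f g l : (forall s, f s = g s) -> Ev f l = Ev g l.
Proof. intros H; induction l as [|[b s] l IH]; unfold Ev in *; simpl in *; [lra|]. rewrite IH, H; ring. Qed.
Lemma Ev_ext_in f g l : (forall s, In s (map snd l) -> f s = g s) -> Ev f l = Ev g l.
Proof. intros H; induction l as [|[b s] l IH]; unfold Ev in *; simpl in *; [lra|].
  rewrite IH, H; auto. Qed.
Lemma Ev_const c l : Ev (fun _ => c) l = c * Ev (fun _ => 1) l.
Proof. induction l as [|[b s] l IH]; unfold Ev in *; simpl in *; [lra|]. rewrite IH; ring. Qed.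
Lemma Ev_swap (F : nat -> nat -> R) l w :
  Ev (fun s => Ev (fun t => F s t) w) l = Ev (fun t => Ev (fun s => F s t) l) w.
Proof.
  induction l as [|[a s] l IH]; simpl.
  - unfold Ev at 1; simpl. induction w as [|[b t] w IHw]; unfold Ev in *; simpl in *; [lra|]. rewrite <- IHw; ring.
  - change (Ev (fun s0 => Ev (fun t => F s0 t) w) ((a, s) :: l)) with
      (a * Ev (fun t => F s t) w + Ev (fun s0 => Ev (fun t => F s0 t) w) l).
    rewrite IH, <- Ev_lin. apply Ev_ext. intros t. reflexivity.
Qed.

Fixpoint lsum (g : nat -> R) (rs : list nat) : R :=
  match rs with nil => 0 | r :: rs => g r + lsum g rs end.
Lemma lsum_ext g h rs : (forall r, g r = h r) -> lsum g rs = lsum h rs.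
Proof. intros H; induction rs; simpl; auto. rewrite IHrs, H; auto. Qed.
Lemma lsum_app g a b : lsum g (a ++ b) = lsum g a + lsum g b.
Proof. induction a; simpl; [lra|]. rewrite IHa; ring. Qed.
Lemma lsum_seq_sum g n : lsum g (seq 0 (S n)) = sum_f_R0 g n.
Proof.
  induction n. simpl; ring.
  rewrite seq_S, lsum_app, IHn. simpl. ring.
Qed.
Lemma lsum_const c n : lsum (fun _ => c) (seq 0 n) = INR n * c.
Proof.
  assert (forall a, lsum (fun _ => c) (seq a n) = INR n * c). { induction n; intros a; simpl; [lra|].
  rewrite IHn. destruct n; simpl; ring. } auto. Qed.
Lemma lsum_tele f a n : lsum (fun t => f t - f (S t)) (seq a n) = f a - f (a + n)%nat.
Proof. revert a; induction n; intros a; simpl. rewrite Nat.add_0_r; ring.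
  rewrite IHn. rewrite <- plus_n_Sm. simpl; ring. Qed.
Lemma Ev_lsum_swap (F : nat -> nat -> R) l rs :
  Ev (fun s => lsum (fun r => F s r) rs) l = lsum (fun r => Ev (fun s => F s r) l) rs.
Proof.
  induction rs; simpl.
  - induction l as [|[b s] l IH]; unfold Ev in *; simpl in *; [lra|]. rewrite IH; ring.
  - rewrite Ev_plusf, IHrs; auto.
Qed.
Lemma Ev_flat_map f (F : nat -> fv) rs : Ev f (flat_map F rs) = lsum (fun r => Ev f (F r)) rs.
Proof. induction rs; simpl; auto. rewrite Ev_app, IHrs; auto. Qed.
Lemma Ev_flat_map_l f (F : R -> nat -> fv) (l : fv) :
  Ev f (flat_map (fun p => F (fst p) (snd p)) l) = fold_right (fun p acc => Ev f (F (fst p) (snd p)) + acc) 0 l.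
Proof. induction l; simpl; auto. rewrite Ev_app, IHl; auto. Qed.

Definition avg (T : nat) : fv := map (fun t => (/ INR (S T), t)) (seq 0 (S T)).
Lemma Ev_avg f T : Ev f (avg T) = / INR (S T) * lsum f (seq 0 (S T)).
Proof.
  unfold avg. generalize (seq 0 (S T)). intros rs; induction rs; unfold Ev in *; simpl in *; [lra|].
  rewrite IHrs; ring. Qed.
Lemma sumc_avg T : Ev (fun _ => 1) (avg T) = 1.
Proof. rewrite Ev_avg, lsum_const. field. apply not_0_INR; lia. Qed.

Section AL.
Variable G : nat -> nat -> R.
Hypothesis Gsym : forall s t, G s t = G t s.
Hypothesis Gsh : forall s t, G (S s) (S t) = G s t.
Definition B (l w : fv) : R := Ev (fun s => Ev (fun t => G s t) w) l.
Hypothesis PSD : forall l, 0 <= B l l.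

Lemma B_sym l w : B l w = B w l.
Proof. unfold B. rewrite Ev_swap. apply Ev_ext; intros; apply Ev_ext; intros; apply Gsym. Qed.
Lemma B_app_l l l' w : B (l ++ l') w = B l w + B l' w.
Proof. unfold B; apply Ev_app. Qed.
Lemma B_app_r l w w' : B l (w ++ w') = B l w + B l w'.
Proof. unfold B. rewrite <- Ev_plusf. apply Ev_ext; intros; apply Ev_app. Qed.
Lemma B_sc_l k l w : B (sc k l) w = k * B l w.
Proof. unfold B; apply Ev_sc. Qed.
Lemma B_sc_r k l w : B l (sc k w) = k * B l w.
Proof. rewrite B_sym, B_sc_l, B_sym; auto. Qed.
Lemma G_shift r s t : G (s + r) (t + r) = G s t.
Proof. induction r. rewrite !Nat.add_0_r; auto. rewrite <- !plus_n_Sm, Gsh; auto. Qed.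
Lemma B_shl r l w : B (shl r l) (shl r w) = B l w.
Proof. unfold B. rewrite Ev_shl. apply Ev_ext; intros s. rewrite Ev_shl. apply Ev_ext; intros; apply G_shift. Qed.

Definition eqv (l w : fv) := forall f, Ev f l = Ev f w.
Lemma eqv_B l w : eqv l w -> B l l = B w w.
Proof. intros H. transitivity (B w l). unfold B; apply H. rewrite B_sym. unfold B; apply H. Qed.

Definition nrm l := sqrt (B l l).
Lemma nrm_pos l : 0 <= nrm l. Proof. apply sqrt_pos. Qed.
Lemma nrm_sq l : nrm l * nrm l = B l l. Proof. apply sqrt_sqrt, PSD. Qed.

Lemma CS l w : B l w * B l w <= B l l * B w w.
Proof.
  apply quad_nonneg; try apply PSD.
  intros lam. generalize (PSD (l ++ sc lam w)).
  rewrite B_app_l, !B_app_r, !B_sc_l, !B_sc_r, (B_sym w l). lra.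
Qed.
Lemma B_le_nrm l w : B l w <= nrm l * nrm w.
Proof.
  generalize (CS l w) (nrm_sq l) (nrm_sq w) (nrm_pos l) (nrm_pos w). intros H1 H2 H3 H4 H5.
  rewrite <- H2, <- H3 in H1. destruct (Rle_dec (B l w) (nrm l * nrm w)) as [|Hn]; auto.
  assert (0 <= nrm l * nrm w) by nra. nra.
Qed.
Lemma nrm_app l w : nrm (l ++ w) <= nrm l + nrm w.
Proof.
  apply sqrt_le_of. generalize (nrm_pos l) (nrm_pos w); lra.
  rewrite B_app_l, !B_app_r, (B_sym w l). generalize (B_le_nrm l w) (nrm_sq l) (nrm_sq w). nra.
Qed.
Lemma nrm_sc k l : nrm (sc k l) = Rabs k * nrm l.
Proof.
  unfold nrm. rewrite B_sc_l, B_sc_r, <- Rmult_assoc.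
  rewrite sqrt_mult. rewrite <- (sqrt_Rsqr_abs k). unfold Rsqr; auto.
  nra. apply PSD.
Qed.
Lemma nrm_shl r l : nrm (shl r l) = nrm l.
Proof. unfold nrm; rewrite B_shl; auto. Qed.
Lemma nrm_eqv l w : eqv l w -> nrm l = nrm w.
Proof. intros; unfold nrm; rewrite (eqv_B l w); auto. Qed.
Lemma nrm_flat_map (F : nat -> fv) rs : nrm (flat_map F rs) <= lsum (fun r => nrm (F r)) rs.
Proof.
  induction rs; simpl. unfold nrm, B; simpl. rewrite sqrt_0; lra.
  generalize (nrm_app (F a) (flat_map F rs)); lra.
Qed.
Lemma nrm_flat_map_l (F : R -> nat -> fv) (l : fv) :
  nrm (flat_map (fun p => F (fst p) (snd p)) l) <= fold_right (fun p acc => nrm (F (fst p) (snd p)) + acc) 0 l.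
Proof.
  induction l; simpl. unfold nrm, B; simpl. rewrite sqrt_0; lra.
  generalize (nrm_app (F (fst a) (snd a)) (flat_map (fun p => F (fst p) (snd p)) l)); lra.
Qed.

Lemma G_diag n : G n n = G 0 0.
Proof. induction n; auto. rewrite Gsh; auto. Qed.
Lemma nrm_single a s : nrm ((a, s) :: nil) = Rabs a * sqrt (G 0 0).
Proof.
  unfold nrm, B, Ev; simpl. rewrite G_diag.
  replace (a * (a * G 0 0 + 0) + 0) with ((a * a) * G 0 0) by ring.
  rewrite sqrt_mult. rewrite <- (sqrt_Rsqr_abs a). unfold Rsqr; auto. nra.
  generalize (PSD ((1, 0%nat) :: nil)); unfold B, Ev; simpl; lra.
Qed.

Definition Dl (T s : nat) : fv := avg T ++ opp (shl s (avg T)).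

Lemma nrm_D1 T : nrm (Dl T 1) <= 2 * sqrt (G 0 0) / INR (S T).
Proof.
  set (c := / INR (S T)).
  assert (Hc : 0 < c) by (unfold c; apply Rinv_0_lt_compat, lt_0_INR; lia).
  assert (E : eqv (Dl T 1) ((c, 0%nat) :: (- c, S T) :: nil)).
  { intros f. unfold Dl. rewrite Ev_app, Ev_opp, Ev_shl, !Ev_avg.
    fold c. change (Ev f ((c,0%nat)::(-c,S T)::nil)) with (c * f 0%nat + (-c * f (S T) + 0)).
    assert (lsum f (seq 0 (S T)) - lsum (fun s => f (s + 1)%nat) (seq 0 (S T)) = f 0%nat - f (S T)).
    { transitivity (lsum (fun t => f t - f (S t)) (seq 0 (S T))).
      clear. generalize (seq 0 (S T)). intros l; induction l; simpl; auto. lra.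
      rewrite Nat.add_1_r. lra.
      rewrite lsum_tele. simpl; auto. }
    replace (c * lsum f (seq 0 (S T)) + - (c * lsum (fun s : nat => f (s + 1)%nat) (seq 0 (S T))))
      with (c * (lsum f (seq 0 (S T)) - lsum (fun s : nat => f (s + 1)%nat) (seq 0 (S T)))) by ring.
    rewrite H; ring. }
  rewrite (nrm_eqv _ _ E).
  change ((c, 0%nat) :: (- c, S T) :: nil) with (((c, 0%nat) :: nil) ++ ((- c, S T) :: nil)).
  eapply Rle_trans. apply nrm_app. rewrite !nrm_single, Rabs_Ropp, Rabs_right by lra.
  unfold c. unfold Rdiv. lra.
Qed.

Lemma nrm_Ds T s : nrm (Dl T s) <= INR s * (2 * sqrt (G 0 0) / INR (S T)).
Proof.
  induction s.
  - simpl. assert (E : eqv (Dl T 0) nil).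
    { intros f. unfold Dl. rewrite Ev_app, Ev_opp, Ev_shl. unfold Ev at 3; simpl.
      rewrite (Ev_ext (fun s => f (s + 0)%nat) f). lra. intros; rewrite Nat.add_0_r; auto. }
    rewrite (nrm_eqv _ _ E). unfold nrm, B; simpl. rewrite sqrt_0. lra.
  - assert (E : eqv (Dl T (S s)) (Dl T s ++ shl s (Dl T 1))).
    { intros f. unfold Dl. rewrite !Ev_app, !Ev_opp, !Ev_shl, !Ev_app, !Ev_opp, !Ev_shl.
      rewrite (Ev_ext (fun s0 : nat => f (s0 + 1 + s)%nat) (fun s0 => f (s0 + S s)%nat)). ring.
      intros; f_equal; lia. }
    rewrite (nrm_eqv _ _ E). eapply Rle_trans. apply nrm_app.
    rewrite nrm_shl, S_INR. generalize (nrm_D1 T). lra.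
Qed.

Definition cv (T : nat) (l : fv) : fv := flat_map (fun r => sc (/ INR (S T)) (shl r l)) (seq 0 (S T)).

Lemma nrm_cv T l : nrm (cv T l) <= nrm l.
Proof.
  eapply Rle_trans. apply nrm_flat_map.
  rewrite (lsum_ext _ (fun _ => / INR (S T) * nrm l)).
  rewrite lsum_const. right. field. apply not_0_INR; lia.
  intros r. rewrite nrm_sc, nrm_shl, Rabs_right; auto.
  left; apply Rinv_0_lt_compat, lt_0_INR; lia.
Qed.

Definition sumc l := Ev (fun _ => 1) l.
Definition Cl (l : fv) := fold_right (fun p acc => Rabs (fst p) * INR (snd p) + acc) 0 l.
Lemma Cl_pos l : 0 <= Cl l.
Proof. induction l; simpl; [lra|]. generalize (Rabs_pos (fst a)) (pos_INR (snd a)); nra. Qed.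

Lemma lsum_scal c g rs : lsum (fun r => c * g r) rs = c * lsum g rs.
Proof. induction rs; simpl; [ring|]. rewrite IHrs; ring. Qed.
Lemma Ev_flat_sc f (F : nat -> fv) (l : fv) :
  Ev f (flat_map (fun p => sc (fst p) (F (snd p))) l) = Ev (fun s => Ev f (F s)) l.
Proof.
  induction l as [|[a s] l IH]; simpl. reflexivity.
  rewrite Ev_app, IH, Ev_sc. reflexivity.
Qed.
Lemma nrm_flat_sc (F : nat -> fv) (l : fv) :
  nrm (flat_map (fun p => sc (fst p) (F (snd p))) l) <= fold_right (fun p acc => Rabs (fst p) * nrm (F (snd p)) + acc) 0 l.
Proof.
  induction l as [|[a s] l IH]; simpl. unfold nrm, B; simpl. rewrite sqrt_0; lra.
  eapply Rle_trans. apply nrm_app. rewrite nrm_sc. lra.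
Qed.

Lemma Ev_aff A c g l : Ev (fun s => A * 1 + c * g s) l = A * Ev (fun _ => 1) l + c * Ev g l.
Proof. induction l as [|[b s] l IH]; unfold Ev in *; simpl in *; [lra|]. rewrite IH; ring. Qed.

Lemma avg_bound T l : sumc l = 1 ->
  nrm (avg T) <= nrm l + Cl l * (2 * sqrt (G 0 0) / INR (S T)).
Proof.
  intros Hs.
  set (e := flat_map (fun p => sc (fst p) (Dl T (snd p))) l).
  assert (E1 : eqv (avg T) (e ++ cv T l)).
  { intros f. rewrite Ev_app. unfold e. rewrite Ev_flat_sc.
    unfold cv. rewrite Ev_flat_map.
    rewrite (lsum_ext _ (fun r => / INR (S T) * Ev (fun s => f (s + r)%nat) l)).
    2:{ intros r; rewrite Ev_sc, Ev_shl; auto. }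
    rewrite (Ev_ext (fun s => Ev f (Dl T s)) (fun s => Ev f (avg T) * 1 + (- / INR (S T)) * lsum (fun t => f (t + s)%nat) (seq 0 (S T)))).
    2:{ intros s. unfold Dl. rewrite Ev_app, Ev_opp, Ev_shl, (Ev_avg (fun s0 => f (s0 + s)%nat)). ring. }
    rewrite Ev_aff.
    rewrite (Ev_ext (fun s => lsum (fun t => f (t + s)%nat) (seq 0 (S T)))
                    (fun s => lsum (fun t => f (s + t)%nat) (seq 0 (S T)))).
    2:{ intros; apply lsum_ext; intros; f_equal; lia. }
    rewrite (Ev_lsum_swap (fun s t => f (s + t)%nat)), lsum_scal.
    unfold sumc in Hs. rewrite Hs.
    ring. }
  rewrite (nrm_eqv _ _ E1). eapply Rle_trans. apply nrm_app.
  generalize (nrm_cv T l). intros Hcv.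
  assert (He : nrm e <= Cl l * (2 * sqrt (G 0 0) / INR (S T))).
  { eapply Rle_trans. apply nrm_flat_sc. unfold Cl.
    set (K := 2 * sqrt (G 0 0) / INR (S T)).
    assert (HK : forall s, nrm (Dl T s) <= INR s * K) by (intros; apply nrm_Ds).
    clearbody K. clear e E1 Hs Hcv.
    induction l as [|[a s] l IH]; simpl. lra.
    generalize (HK s) (Rabs_pos a). intros. nra. }
  lra.
Qed.

Definition midv T S := sc (/2) (avg T ++ avg S).
Lemma sumc_mid T S : sumc (midv T S) = 1.
Proof. unfold sumc, midv. rewrite Ev_sc, Ev_app, !sumc_avg. lra. Qed.
Lemma parallelogram T S :
  B (avg T ++ opp (avg S)) (avg T ++ opp (avg S)) =
  2 * B (avg T) (avg T) + 2 * B (avg S) (avg S) - 4 * B (midv T S) (midv T S).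
Proof.
  unfold midv, opp. rewrite !B_app_l, !B_app_r, !B_sc_l, !B_sc_r, !B_app_l, !B_app_r, (B_sym (avg S) (avg T)).
  field.
Qed.

Definition Eset : R -> Prop := fun y => exists l, sumc l = 1 /\ y = - B l l.
Lemma Eset_bound : bound Eset.
Proof. exists 0. intros y [l [_ Hy]]. generalize (PSD l); lra. Qed.
Lemma Eset_ne : exists y, Eset y.
Proof. exists (- B ((1,0%nat)::nil) ((1,0%nat)::nil)). exists ((1,0%nat)::nil). split; auto.
  unfold sumc, Ev; simpl; ring. Qed.
Definition Dinf := - proj1_sig (completeness Eset Eset_bound Eset_ne).
Lemma Dinf_le l : sumc l = 1 -> Dinf <= B l l.
Proof.
  intros H. unfold Dinf. destruct (completeness Eset Eset_bound Eset_ne) as [m [Hub Hl]]. simpl.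
  assert (- B l l <= m) by (apply Hub; exists l; auto). lra.
Qed.
Lemma Dinf_pos : 0 <= Dinf.
Proof.
  unfold Dinf. destruct (completeness Eset Eset_bound Eset_ne) as [m [Hub Hl]]. simpl.
  assert (m <= 0). { apply Hl. intros y [l [_ Hy]]. generalize (PSD l); lra. } lra.
Qed.
Lemma Dinf_approx eps : 0 < eps -> exists l, sumc l = 1 /\ B l l < Dinf + eps.
Proof.
  intros He. unfold Dinf. destruct (completeness Eset Eset_bound Eset_ne) as [m [Hub Hl]]. simpl.
  apply Classical_Prop.NNPP. intros Hn.
  assert (m <= m - eps). { apply Hl. intros y [l [Hs Hy]]. subst y.
    destruct (Rle_dec (- B l l) (m - eps)); auto. exfalso; apply Hn. exists l; split; auto. lra. }
  lra.
Qed.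

Lemma AL_cauchy delta : 0 < delta -> exists N, forall T S, (N <= T)%nat -> (N <= S)%nat ->
  B (avg T ++ opp (avg S)) (avg T ++ opp (avg S)) <= delta.
Proof.
  intros Hd.
  set (D := Dinf). set (sD := sqrt D).
  assert (HD : 0 <= D) by apply Dinf_pos.
  assert (HsD : 0 <= sD) by apply sqrt_pos.
  assert (HsD2 : sD * sD = D) by (apply sqrt_sqrt; auto).
  set (eta := Rmin 1 (delta / (4 * (2 * sD + 1)))).
  assert (Heta : 0 < eta). { unfold eta. apply Rmin_glb_lt. lra. apply Rdiv_lt_0_compat; lra. }
  assert (Heta1 : eta <= 1) by apply Rmin_l.
  assert (Heta2 : eta <= delta / (4 * (2 * sD + 1))) by apply Rmin_r.
  destruct (Dinf_approx ((eta/2) * (eta/2))) as [l [Hs Hl]]. nra.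
  assert (Hnl : nrm l <= sD + eta / 2).
  { unfold nrm. eapply Rle_trans. apply sqrt_le_1_alt. left. apply Hl.
    unfold sD; apply sqrt_add_sq; lra. }
  set (K0 := Cl l * (2 * sqrt (G 0 0))).
  assert (HK0 : 0 <= K0). { unfold K0. generalize (Cl_pos l) (sqrt_pos (G 0 0)). nra. }
  destruct (archimed_cor1 (eta / (2 * (K0 + 1)))) as [N [HN HN0]].
  { apply Rdiv_lt_0_compat; lra. }
  assert (Hav : forall T, (N <= T)%nat -> B (avg T) (avg T) <= (sD + eta) * (sD + eta)).
  { intros T HT. rewrite <- nrm_sq.
    assert (nrm (avg T) <= sD + eta).
    { eapply Rle_trans. apply (avg_bound T l Hs).
      assert (Cl l * (2 * sqrt (G 0 0) / INR (S T)) <= eta / 2).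
      { replace (Cl l * (2 * sqrt (G 0 0) / INR (S T))) with (K0 * / INR (S T)) by (unfold K0, Rdiv; ring).
        assert (/ INR (S T) <= / INR N).
        { apply Rinv_le_contravar. apply lt_0_INR; lia. apply le_INR; lia. }
        assert (K0 * / INR N <= K0 * (eta / (2 * (K0 + 1)))) by (apply Rmult_le_compat_l; lra).
        assert (K0 * (eta / (2 * (K0 + 1))) <= eta / 2).
        { unfold Rdiv. rewrite Rinv_mult. 
          assert (0 < / (K0 + 1)) by (apply Rinv_0_lt_compat; lra).
          assert (K0 * / (K0 + 1) <= 1).
          { apply (Rmult_le_reg_r (K0 + 1)). lra. rewrite Rmult_assoc, Rinv_l; lra. }
          assert (0 < eta * / 2) by lra. nra. }
        assert (K0 * / INR (S T) <= K0 * / INR N) by (apply Rmult_le_compat_l; lra).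
        lra. }
      lra. }
    generalize (nrm_pos (avg T)). nra. }
  exists N. intros T S HT HS.
  rewrite parallelogram.
  generalize (Hav T HT) (Hav S HS) (Dinf_le _ (sumc_mid T S)). fold D. intros h1 h2 h3.
  assert (4 * eta * (2 * sD + 1) <= delta).
  { apply (Rmult_le_compat_l (4 * (2 * sD + 1))) in Heta2; [|lra].
    replace (4 * (2 * sD + 1) * (delta / (4 * (2 * sD + 1)))) with delta in Heta2 by (field; lra). lra. }
  nra.
Qed.

Lemma Ev_avg_sum h T : Ev h (avg T) = / INR (S T) * sum_f_R0 h T.
Proof. rewrite Ev_avg, lsum_seq_sum; auto. Qed.

Lemma AL_cauchy_h (h : nat -> R) (K : R) : 0 <= K -> (forall l, Ev h l * Ev h l <= K * B l l) ->
  Cauchy_crit (fun T => / INR (S T) * sum_f_R0 h T).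
Proof.
  intros HK Hh eps He.
  destruct (AL_cauchy (eps * eps / (K + 1))) as [N HN].
  { apply Rdiv_lt_0_compat; nra. }
  exists N. intros n m Hn Hm. unfold Rdist.
  rewrite <- !Ev_avg_sum.
  specialize (HN n m Hn Hm).
  specialize (Hh (avg n ++ opp (avg m))).
  rewrite Ev_app, Ev_opp in Hh.
  set (x := Ev h (avg n) + - Ev h (avg m)) in *.
  assert (x * x < eps * eps).
  { assert (K * (eps * eps / (K + 1)) < eps * eps).
    { unfold Rdiv. assert (0 < / (K + 1)) by (apply Rinv_0_lt_compat; lra).
      assert (K * / (K + 1) < 1).
      { apply (Rmult_lt_reg_r (K + 1)). lra. rewrite Rmult_assoc, Rinv_l; lra. }
      assert (0 < eps * eps) by nra. nra. }
    assert (K * B (avg n ++ opp (avg m)) (avg n ++ opp (avg m)) <= K * (eps * eps / (K + 1))) by (apply Rmult_le_compat_l; auto).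
    lra. }
  replace (Ev h (avg n) - Ev h (avg m)) with x by (unfold x; ring).
  destruct (Rcase_abs x); [rewrite Rabs_left | rewrite Rabs_right]; nra.
Qed.

End AL.

Section Gram.
Variable V : Type. Variable vz : V. Variable vadd : V -> V -> V. Variable vsc : R -> V -> V.
Variable ip : V -> V -> R.
Hypothesis ip_lin : forall a x y z, ip (vadd (vsc a x) y) z = a * ip x z + ip y z.
Hypothesis ip_z : forall z, ip vz z = 0.
Hypothesis ip_sym : forall x y, ip x y = ip y x.
Variable X : nat -> V.
Fixpoint comb (l : fv) : V :=
  match l with nil => vz | p :: l' => vadd (vsc (fst p) (X (snd p))) (comb l') end.
Lemma comb_ip_l l z : ip (comb l) z = Ev (fun s => ip (X s) z) l.
Proof. induction l as [|[a s] l IH]; simpl. rewrite ip_z; reflexivity.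
  rewrite ip_lin, IH. reflexivity. Qed.
Lemma comb_B (G : nat -> nat -> R) l w :
  (forall s t, In s (map snd l) -> In t (map snd w) -> G s t = ip (X s) (X t)) ->
  B G l w = ip (comb l) (comb w).
Proof.
  intros H. rewrite comb_ip_l. unfold B. apply Ev_ext_in. intros s Hs.
  rewrite ip_sym, comb_ip_l. apply Ev_ext_in. intros t Ht. rewrite ip_sym. auto.
Qed.
End Gram.

Lemma sum_lin (f g : nat -> R) a N : sum_f_R0 (fun k => a * f k + g k) N = a * sum_f_R0 f N + sum_f_R0 g N.
Proof. induction N; simpl; [ring|]. rewrite IHN; ring. Qed.
Lemma single_le (f : nat -> R) i N : (forall k, 0 <= f k) -> (i <= N)%nat -> f i <= sum_f_R0 f N.
Proof.
  intros Hf Hi. induction N.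
  - assert (i = 0%nat) by lia; subst; simpl; lra.
  - destruct (Nat.eq_dec i (S N)) as [->|Hne].
    + simpl. generalize (cond_pos_sum f N Hf); lra.
    + simpl. generalize (IHN ltac:(lia)) (Hf (S N)); lra.
Qed.
Lemma sum_mono (f : nat -> R) N M : (forall k, 0 <= f k) -> (N <= M)%nat -> sum_f_R0 f N <= sum_f_R0 f M.
Proof. intros Hf H. induction H; [lra|]. simpl. generalize (Hf (S m)); lra. Qed.

Definition rv := nat -> Dir -> R.
Definition loc (w w' : rv) k := w k DL * w' k DL + w k DO * w' k DO + w k DR * w' k DR.
Definition ipN N (w w' : rv) := sum_f_R0 (loc w w') N.
Definition supp N (w : rv) := forall k d, (N < k)%nat -> w k d = 0.

Lemma supp_mono N M w : supp N w -> (N <= M)%nat -> supp M w.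
Proof. intros H HM k d Hk. apply H; lia. Qed.
Lemma ipN_sym N w w' : ipN N w w' = ipN N w' w.
Proof. unfold ipN; apply sum_eq; intros; unfold loc; ring. Qed.
Lemma ipN_supp_r N M w w' : supp N w' -> (N <= M)%nat -> ipN M w w' = ipN N w w'.
Proof.
  intros Hs H. induction H; auto. unfold ipN in *; simpl. rewrite IHle.
  unfold loc. rewrite !(Hs (S m)) by lia. ring.
Qed.
Lemma ipN_nonneg N w : 0 <= ipN N w w.
Proof. apply cond_pos_sum. intros; unfold loc; nra. Qed.
Lemma ipN_mono N M w : (N <= M)%nat -> ipN N w w <= ipN M w w.
Proof. intros; apply sum_mono; auto. intros; unfold loc; nra. Qed.
Lemma coord_le N w i d : (i <= N)%nat -> w i d * w i d <= ipN N w w.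
Proof.
  intros H. eapply Rle_trans. 2: apply single_le; [|exact H]. unfold loc.
  destruct d; nra. intros; unfold loc; nra.
Qed.
Lemma ipN_lin N a x y z : ipN N (fun k d => a * x k d + y k d) z = a * ipN N x z + ipN N y z.
Proof. unfold ipN. rewrite <- sum_lin. apply sum_eq; intros; unfold loc; ring. Qed.
Lemma ipN_ext N w1 w2 z : (forall k d, w1 k d = w2 k d) -> ipN N w1 z = ipN N w2 z.
Proof. intros H; unfold ipN; apply sum_eq; intros; unfold loc; rewrite !H; auto. Qed.

Lemma CS_ipN N x y : ipN N x y * ipN N x y <= ipN N x x * ipN N y y.
Proof.
  apply quad_nonneg; try apply ipN_nonneg. intros l.
  generalize (ipN_nonneg N (fun k d => l * y k d + x k d)).
  intros H. rewrite ipN_lin in H. rewrite ipN_sym, ipN_lin in H.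
  rewrite (ipN_sym N x (fun k d => l * y k d + x k d)), ipN_lin in H.
  rewrite (ipN_sym N y x) in H. lra.
Qed.

Section Conc.
Variables p q r : nat -> R.
Hypothesis Hp : forall j, 0 < p j.
Hypothesis Hq0 : q 0%nat = 0.
Hypothesis Hq : forall j, (1 <= j)%nat -> 0 < q j.
Hypothesis Hr : forall j, 0 <= r j.
Hypothesis Hq' : forall j, 0 <= q j.
Hypothesis Hsum : forall j, p j + q j + r j = 1.

Let am := amp p q r.
Lemma amp_sq k : am k DL * am k DL + am k DO * am k DO + am k DR * am k DR = 1.
Proof. unfold am; simpl. rewrite !sqrt_sqrt; auto. generalize (Hsum k); lra. left; auto. Qed.
Lemma amp0L : am 0%nat DL = 0.
Proof. unfold am; simpl. rewrite Hq0, sqrt_0; auto. Qed.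

Definition sa (w : rv) k := am k DL * w k DL + am k DO * w k DO + am k DR * w k DR.
Definition CoinR (w : rv) : rv := fun k d => 2 * am k d * sa w k - w k d.
Definition ShiftR (w : rv) : rv := fun k d =>
  match d with
  | DR => w (S k) DL
  | DL => match k with O => 0 | S k' => w k' DR end
  | DO => w k DO
  end.
Definition Ur w := ShiftR (CoinR w).
Fixpoint Urp t w := match t with O => w | S t' => Ur (Urp t' w) end.

Lemma loc_Coin w w' k : loc (CoinR w) (CoinR w') k = loc w w' k.
Proof.
  unfold loc, CoinR, sa. generalize (amp_sq k). intros H.
  set (aL := am k DL) in *. set (aO := am k DO) in *. set (aR := am k DR) in *.
  set (s := aL * w k DL + aO * w k DO + aR * w k DR).
  set (s' := aL * w' k DL + aO * w' k DO + aR * w' k DR).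
  transitivity (4 * s * s' * (aL * aL + aO * aO + aR * aR - 1) + (w k DL * w' k DL + w k DO * w' k DO + w k DR * w' k DR)).
  unfold s, s'; ring. rewrite H; ring.
Qed.
Lemma ipN_Coin N w w' : ipN N (CoinR w) (CoinR w') = ipN N w w'.
Proof. unfold ipN; apply sum_eq; intros; apply loc_Coin. Qed.
Lemma Coin0L w : CoinR w 0%nat DL = - w 0%nat DL.
Proof. unfold CoinR. rewrite amp0L; ring. Qed.
Lemma supp_Coin N w : supp N w -> supp N (CoinR w).
Proof. intros H k d Hk. unfold CoinR, sa. rewrite !(H k) by auto. ring. Qed.

Lemma shift_id M y y' :
  ipN M (ShiftR y) (ShiftR y') + y M DR * y' M DR + y 0%nat DL * y' 0%nat DL
  = ipN M y y' + y (S M) DL * y' (S M) DL.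
Proof.
  induction M.
  - unfold ipN, loc, ShiftR; simpl. ring.
  - unfold ipN in *. simpl sum_f_R0.
    change (loc (ShiftR y) (ShiftR y') (S M)) with
      (y M DR * y' M DR + y (S M) DO * y' (S M) DO + y (S (S M)) DL * y' (S (S M)) DL).
    change (loc y y' (S M)) with
      (y (S M) DL * y' (S M) DL + y (S M) DO * y' (S M) DO + y (S M) DR * y' (S M) DR).
    lra.
Qed.
Lemma ipN_Shift N y y' : supp N y' -> ipN (S N) (ShiftR y) (ShiftR y') = ipN N y y' - y 0%nat DL * y' 0%nat DL.
Proof.
  intros Hs. generalize (shift_id (S N) y y').
  rewrite (Hs (S N)), (Hs (S (S N))) by lia.
  rewrite (ipN_supp_r N (S N) y y' Hs) by lia. lra.
Qed.
Lemma ipN_U N w w' : supp N w' -> ipN (S N) (Ur w) (Ur w') = ipN N w w' - w 0%nat DL * w' 0%nat DL.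
Proof.
  intros Hs. unfold Ur. rewrite ipN_Shift by (apply supp_Coin; auto).
  rewrite ipN_Coin, !Coin0L. ring.
Qed.
Lemma supp_U N w : supp N w -> supp (S N) (Ur w).
Proof.
  intros H k d Hk. apply supp_Coin in H. unfold Ur, ShiftR.
  destruct d. destruct k. lia. apply H; lia. apply H; lia. apply H; lia.
Qed.
Lemma U0L w : Ur w 0%nat DL = 0.
Proof. reflexivity. Qed.
Lemma U_lin a x y k d : Ur (fun k d => a * x k d + y k d) k d = a * Ur x k d + Ur y k d.
Proof. unfold Ur, ShiftR, CoinR, sa. destruct d; [destruct k|..]; ring. Qed.
Lemma U_ext x y : (forall k d, x k d = y k d) -> forall k d, Ur x k d = Ur y k d.
Proof. intros H k d. unfold Ur, ShiftR, CoinR, sa. destruct d; [destruct k|..]; rewrite ?H; ring. Qed.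


Section Orbit.
Variable j : nat.
Variable u : rv.
Hypothesis Hu : supp j u.
Hypothesis Hu0 : u 0%nat DL = 0.
Definition xo t := Urp t u.
Lemma supp_x t : supp (j + t) (xo t).
Proof. induction t; unfold xo in *; simpl. rewrite Nat.add_0_r; auto. rewrite <- plus_n_Sm; apply supp_U; auto. Qed.
Lemma x0L t : xo t 0%nat DL = 0.
Proof. destruct t; unfold xo; simpl; auto. Qed.
Definition Gx s t := ipN (j + s + t) (xo s) (xo t).
Lemma Gx_eq M s t : (j + t <= M)%nat -> ipN M (xo s) (xo t) = Gx s t.
Proof. intros H. unfold Gx. rewrite (ipN_supp_r (j + t) M), (ipN_supp_r (j + t) (j + s + t)); auto; try apply supp_x; lia. Qed.
Lemma Gx_sym s t : Gx s t = Gx t s.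
Proof. unfold Gx at 1. rewrite ipN_sym. apply Gx_eq. lia. Qed.
Lemma Gx_sh s t : Gx (S s) (S t) = Gx s t.
Proof.
  rewrite <- (Gx_eq (S (j + s + t))) by lia. unfold xo; simpl. rewrite ipN_U.
  fold (xo s) (xo t). rewrite x0L, Gx_eq by lia. ring. apply (supp_mono (j + t)); [apply supp_x| lia].
Qed.

Definition vz : rv := fun _ _ => 0.
Definition vadd (a b : rv) : rv := fun k d => a k d + b k d.
Definition vsc (c : R) (a : rv) : rv := fun k d => c * a k d.
Lemma sum_zero N : sum_f_R0 (fun _ => 0) N = 0.
Proof. induction N; simpl; lra. Qed.
Lemma ipN_z M z : ipN M vz z = 0.
Proof. unfold ipN. transitivity (sum_f_R0 (fun _ => 0) M); [|apply sum_zero]. apply sum_eq; intros; unfold loc, vz; ring. Qed.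
Lemma ipN_lin' M a x y z : ipN M (vadd (vsc a x) y) z = a * ipN M x z + ipN M y z.
Proof. apply ipN_lin. Qed.
Lemma comb_val l k d : comb rv vz vadd vsc xo l k d = Ev (fun s => xo s k d) l.
Proof. induction l as [|[a s] l IH]. reflexivity.
  transitivity (a * xo s k d + comb rv vz vadd vsc xo l k d). reflexivity. rewrite IH. reflexivity. Qed.

Definition maxl (l : fv) := fold_right (fun p m => Nat.max (snd p) m) 0%nat l.
Lemma maxl_in l s : In s (map snd l) -> (s <= maxl l)%nat.
Proof. induction l; simpl; intros H; [contradiction|]. destruct H as [H|H]; [subst; lia | apply IHl in H; lia]. Qed.

Lemma B_ipN l M : (j + 2 * maxl l <= M)%nat ->
  B Gx l l = ipN M (comb rv vz vadd vsc xo l) (comb rv vz vadd vsc xo l).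
Proof.
  intros H. apply comb_B. apply ipN_lin'. apply ipN_z. apply ipN_sym.
  intros s t Hs Ht. apply maxl_in in Hs; apply maxl_in in Ht. symmetry; apply Gx_eq; lia.
Qed.
Lemma Bx_psd l : 0 <= B Gx l l.
Proof. rewrite (B_ipN l (j + 2 * maxl l)) by lia. apply ipN_nonneg. Qed.
Lemma Bx_coord i d l : Ev (fun s => xo s i d) l * Ev (fun s => xo s i d) l <= 1 * B Gx l l.
Proof.
  rewrite (B_ipN l (i + j + 2 * maxl l)) by lia. rewrite <- comb_val, Rmult_1_l.
  apply coord_le; lia.
Qed.
Lemma Bx_vec l M' : ipN M' (fun k d => Ev (fun s => xo s k d) l) (fun k d => Ev (fun s => xo s k d) l) <= B Gx l l.
Proof.
  rewrite (B_ipN l (M' + j + 2 * maxl l)) by lia.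
  eapply Rle_trans. apply (ipN_mono M' (M' + j + 2 * maxl l)). lia.
  right. unfold ipN; apply sum_eq; intros; unfold loc; rewrite !comb_val; auto.
Qed.

Definition wavg T k d := / INR (S T) * sum_f_R0 (fun s => xo s k d) T.

Lemma cauchy_coord i d : Cauchy_crit (fun T => / INR (S T) * sum_f_R0 (fun s => xo s i d) T).
Proof.
  apply (AL_cauchy_h Gx Gx_sym Gx_sh Bx_psd (fun s => xo s i d) 1). lra.
  intros l; apply Bx_coord.
Qed.
Lemma cauchy_vec delta : 0 < delta -> exists N, forall T S, (N <= T)%nat -> (N <= S)%nat ->
  forall M', ipN M' (fun k d => wavg T k d - wavg S k d) (fun k d => wavg T k d - wavg S k d) <= delta.
Proof.
  intros Hd. destruct (AL_cauchy Gx Gx_sym Gx_sh Bx_psd delta Hd) as [N HN].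
  exists N. intros T S HT HS M'. eapply Rle_trans. 2: apply (HN T S HT HS).
  eapply Rle_trans. 2: apply Bx_vec with (M' := M').
  right. unfold ipN; apply sum_eq; intros; unfold loc, wavg.
  rewrite !Ev_app, !Ev_opp, !Ev_avg_sum. ring.
Qed.

Definition kv := nat -> Dir -> nat -> Dir -> R.
Definition dsum (f : Dir -> R) := f DL + f DO + f DR.
Definition locK (K1 K2 : kv) k k' := dsum (fun d => dsum (fun d' => K1 k d k' d' * K2 k d k' d')).
Definition ipK M (K1 K2 : kv) := sum_f_R0 (fun k => sum_f_R0 (fun k' => locK K1 K2 k k') M) M.
Definition tens (x : rv) : kv := fun k d k' d' => x k d * x k' d'.
Definition kz : kv := fun _ _ _ _ => 0.
Definition kadd (a b : kv) : kv := fun k d k' d' => a k d k' d' + b k d k' d'.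
Definition ksc (c : R) (a : kv) : kv := fun k d k' d' => c * a k d k' d'.

Lemma ipK_tens M x y : ipK M (tens x) (tens y) = ipN M x y * ipN M x y.
Proof.
  unfold ipK, ipN. rewrite (scal_sum (loc x y) M (sum_f_R0 (loc x y) M)). apply sum_eq; intros k _.
  rewrite (scal_sum (loc x y) M (loc x y k)). apply sum_eq; intros k' _.
  unfold locK, dsum, tens, loc; ring.
Qed.
Lemma ipK_lin M a x y z : ipK M (kadd (ksc a x) y) z = a * ipK M x z + ipK M y z.
Proof.
  unfold ipK. rewrite <- sum_lin. apply sum_eq; intros. rewrite <- sum_lin. apply sum_eq; intros.
  unfold locK, dsum, kadd, ksc; ring.
Qed.
Lemma ipK_z M z : ipK M kz z = 0.
Proof. unfold ipK. transitivity (sum_f_R0 (fun _ => 0) M); [|apply sum_zero]. apply sum_eq; intros.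
  transitivity (sum_f_R0 (fun _ => 0) M); [|apply sum_zero]. apply sum_eq; intros.
  unfold locK, dsum, kz; ring. Qed.
Lemma ipK_sym M x y : ipK M x y = ipK M y x.
Proof. unfold ipK; apply sum_eq; intros; apply sum_eq; intros; unfold locK, dsum; ring. Qed.
Lemma ipK_nonneg M x : 0 <= ipK M x x.
Proof. apply cond_pos_sum; intros; apply cond_pos_sum; intros; unfold locK, dsum. nra. Qed.
Lemma ipK_coord M (K : kv) i d : (i <= M)%nat -> K i d i d * K i d i d <= ipK M K K.
Proof.
  intros H. unfold ipK. eapply Rle_trans. 2: apply single_le; [|exact H].
  eapply Rle_trans. 2: apply single_le; [|exact H].
  unfold locK, dsum. destruct d; nra.
  intros; unfold locK, dsum; nra.
  intros; apply cond_pos_sum; intros; unfold locK, dsum; nra.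
Qed.

Definition G2 s t := Gx s t * Gx s t.
Lemma G2_sym s t : G2 s t = G2 t s. Proof. unfold G2; rewrite Gx_sym; auto. Qed.
Lemma G2_sh s t : G2 (S s) (S t) = G2 s t. Proof. unfold G2; rewrite Gx_sh; auto. Qed.
Definition xt s := tens (xo s).
Lemma combK_val l k d k' d' : comb kv kz kadd ksc xt l k d k' d' = Ev (fun s => xo s k d * xo s k' d') l.
Proof. induction l as [|[a s] l IH]. reflexivity.
  transitivity (a * (xo s k d * xo s k' d') + comb kv kz kadd ksc xt l k d k' d'). reflexivity. rewrite IH. reflexivity. Qed.
Lemma B2_ipK l M : (j + 2 * maxl l <= M)%nat ->
  B G2 l l = ipK M (comb kv kz kadd ksc xt l) (comb kv kz kadd ksc xt l).
Proof.
  intros H. apply comb_B. apply ipK_lin. apply ipK_z. apply ipK_sym.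
  intros s t Hs Ht. apply maxl_in in Hs; apply maxl_in in Ht. unfold xt. rewrite ipK_tens.
  unfold G2. rewrite Gx_eq; auto; lia.
Qed.
Lemma B2_psd l : 0 <= B G2 l l.
Proof. rewrite (B2_ipK l (j + 2 * maxl l)) by lia. apply ipK_nonneg. Qed.
Lemma cauchy_sq i d : Cauchy_crit (fun T => / INR (S T) * sum_f_R0 (fun s => xo s i d * xo s i d) T).
Proof.
  apply (AL_cauchy_h G2 G2_sym G2_sh B2_psd (fun s => xo s i d * xo s i d) 1). lra.
  intros l. rewrite (B2_ipK l (i + j + 2 * maxl l)) by lia. rewrite <- combK_val, Rmult_1_l.
  apply ipK_coord; lia.
Qed.
End Orbit.
End Conc.

Lemma cv_const c : Un_cv (fun _ => c) c.
Proof. intros e He. exists 0%nat. intros. unfold Rdist. rewrite Rminus_diag, Rabs_R0; auto. Qed.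
Lemma cv_ext u v l : (forall n, u n = v n) -> Un_cv u l -> Un_cv v l.
Proof. intros H Hu e He. destruct (Hu e He) as [N HN]. exists N. intros n Hn. rewrite <- H; auto. Qed.
Lemma cv_shift u l K : Un_cv u l -> Un_cv (fun n => u (n + K)%nat) l.
Proof. intros Hu e He. destruct (Hu e He) as [N HN]. exists N. intros n Hn. apply HN. lia. Qed.
Lemma cv_unshift u l : Un_cv (fun n => u (S n)) l -> Un_cv u l.
Proof. intros Hu e He. destruct (Hu e He) as [N HN]. exists (S N). intros n Hn.
  destruct n. lia. apply HN. lia. Qed.
Lemma cv_le_ev a A N d : Un_cv a A -> (forall n, (N <= n)%nat -> a n <= d) -> A <= d.
Proof.
  intros Ha H. destruct (Rle_dec A d) as [|Hn]; auto. exfalso.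
  destruct (Ha (A - d)) as [M HM]. lra.
  specialize (HM (M + N)%nat ltac:(lia)). specialize (H (M + N)%nat ltac:(lia)).
  unfold Rdist in HM. apply Rabs_def2 in HM. lra.
Qed.
Lemma cv_incr_le u l n : (forall m, u m <= u (S m)) -> Un_cv u l -> u n <= l.
Proof.
  intros Hi Hu. destruct (Rle_dec (u n) l) as [|Hn]; auto. exfalso.
  assert (Hm : forall m, u n <= u (m + n)%nat). { induction m; simpl; [lra|]. generalize (Hi (m + n)%nat); lra. }
  destruct (Hu (u n - l)) as [M HM]. lra.
  specialize (HM (M + n)%nat ltac:(lia)). specialize (Hm M). unfold Rdist in HM. apply Rabs_def2 in HM. lra.
Qed.

Section Final.
Variables p q r : nat -> R.
Hypothesis Hp : forall j, 0 < p j.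
Hypothesis Hq0 : q 0%nat = 0.
Hypothesis Hq : forall j, (1 <= j)%nat -> 0 < q j.
Hypothesis Hr : forall j, 0 <= r j.
Hypothesis Hq' : forall j, 0 <= q j.
Hypothesis Hsum : forall j, p j + q j + r j = 1.
Variable CR : R.
Hypothesis HCR : infinite_sum (CR_term p q) CR.

Let am := amp p q r.

Lemma prodq_pos k : 0 < prodq q k.
Proof. induction k; simpl; [lra|]. apply Rmult_lt_0_compat; auto. apply Hq; lia. Qed.
Lemma prodp_pos k : 0 < prodp p k.
Proof. induction k; simpl; [lra|]. apply Rmult_lt_0_compat; auto. Qed.
Lemma CR_term_pos k : 0 < CR_term p q k.
Proof. unfold CR_term. apply Rdiv_lt_0_compat; [apply prodp_pos|apply prodq_pos]. Qed.
Lemma CR_pos : 0 <= CR.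
Proof.
  apply (@Rle_cv_lim (fun _ => 0) (sum_f_R0 (CR_term p q)) 0 CR). intros n. apply cond_pos_sum.
  intros; left; apply CR_term_pos. apply cv_const. exact HCR.
Qed.
Definition pw k := prodp p k / prodq q k.
Lemma pi_eq k : pi_stat p q CR k = / (1 + CR) * pw k.
Proof. unfold pi_stat, pw. destruct k; auto. simpl. field. generalize CR_pos; lra. Qed.
Lemma pw_pos k : 0 < pw k. Proof. unfold pw. apply Rdiv_lt_0_compat; [apply prodp_pos|apply prodq_pos]. Qed.
Lemma pi_pos k : 0 < pi_stat p q CR k.
Proof. rewrite pi_eq. apply Rmult_lt_0_compat. apply Rinv_0_lt_compat. generalize CR_pos; lra. apply pw_pos. Qed.
Lemma DB k : pi_stat p q CR (S k) * q (S k) = pi_stat p q CR k * p k.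
Proof.
  rewrite !pi_eq. unfold pw. simpl. generalize (prodq_pos k) (Hq (S k) ltac:(lia)). intros. generalize CR_pos; intros. field. repeat split; lra.
Qed.
Lemma Psum_eq M : sum_f_R0 (pi_stat p q CR) (S M) = / (1 + CR) * (1 + sum_f_R0 (CR_term p q) M).
Proof.
  induction M.
  - simpl. rewrite !pi_eq. unfold pw, CR_term. simpl. field. generalize CR_pos (Hq 1 ltac:(lia)); intros; split; lra.
  - change (sum_f_R0 (pi_stat p q CR) (S (S M))) with (sum_f_R0 (pi_stat p q CR) (S M) + pi_stat p q CR (S (S M))).
    rewrite IHM. simpl sum_f_R0. rewrite pi_eq. unfold pw, CR_term. ring.
Qed.
Lemma Psum_cv : Un_cv (sum_f_R0 (pi_stat p q CR)) 1.
Proof.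
  apply cv_unshift.
  assert (H : Un_cv (fun n => / (1 + CR) * (1 + sum_f_R0 (CR_term p q) n)) (/ (1 + CR) * (1 + CR))).
  { apply CV_mult. apply cv_const. apply CV_plus. apply cv_const. exact HCR. }
  replace (/ (1 + CR) * (1 + CR)) with 1 in H by (field; generalize CR_pos; lra).
  apply (cv_ext _ _ _ (fun n => eq_sym (Psum_eq n)) H).
Qed.
Lemma Psum_le M : sum_f_R0 (pi_stat p q CR) M <= 1.
Proof. apply cv_incr_le. intros m; simpl; generalize (pi_pos (S m)); lra. apply Psum_cv. Qed.

Definition phi k := sqrt (pi_stat p q CR k).
Definition Phi : rv := fun k d => phi k * am k d.
Lemma phi_pos k : 0 < phi k. Proof. apply sqrt_lt_R0, pi_pos. Qed.
Lemma phi_rec k : am (S k) DL * phi (S k) = am k DR * phi k.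
Proof.
  unfold am, phi; simpl. rewrite <- !sqrt_mult. rewrite (Rmult_comm (q (S k))), DB, Rmult_comm; auto.
  left; auto. left; apply pi_pos. apply Hq'. left; apply pi_pos.
Qed.
Lemma loc_Phi k : loc Phi Phi k = pi_stat p q CR k.
Proof.
  unfold loc, Phi. transitivity (phi k * phi k * (am k DL * am k DL + am k DO * am k DO + am k DR * am k DR)). ring.
  rewrite (amp_sq p q r Hp Hr Hq' Hsum). unfold phi. rewrite sqrt_sqrt. ring. left; apply pi_pos.
Qed.
Lemma ipN_PhiPhi M : ipN M Phi Phi = sum_f_R0 (pi_stat p q CR) M.
Proof. unfold ipN; apply sum_eq; intros; apply loc_Phi. Qed.
Lemma sa_Phi k : sa p q r Phi k = phi k.
Proof.
  unfold sa, Phi. fold am. transitivity (phi k * (am k DL * am k DL + am k DO * am k DO + am k DR * am k DR)). ring.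
  rewrite (amp_sq p q r Hp Hr Hq' Hsum). ring.
Qed.
Lemma U_Phi k d : Ur p q r Phi k d = Phi k d.
Proof.
  unfold Ur, ShiftR, CoinR.
  destruct d; [destruct k|..]; repeat rewrite sa_Phi; fold am; unfold Phi.
  - unfold am; simpl. rewrite Hq0, sqrt_0. ring.
  - pose proof (phi_rec k); nra.
  - ring.
  - pose proof (phi_rec k); nra.
Qed.
Lemma Phi0L : Phi 0%nat DL = 0.
Proof. unfold Phi, am; simpl. rewrite Hq0, sqrt_0; ring. Qed.
Lemma ipN_Phi_U N w : supp N w -> ipN (S N) Phi (Ur p q r w) = ipN N Phi w.
Proof.
  intros Hs. transitivity (ipN (S N) (Ur p q r Phi) (Ur p q r w)).
  apply ipN_ext; intros; rewrite U_Phi; auto.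
  rewrite (ipN_U p q r Hp Hq0 Hr Hq' Hsum N Phi w Hs), Phi0L. ring.
Qed.

Lemma sum_shift (f : nat -> R) T : sum_f_R0 (fun s => f (S s)) T = sum_f_R0 f (S T) - f 0%nat.
Proof. induction T; simpl; [ring|]. simpl in IHT. rewrite IHT. ring. Qed.
Lemma jensen (f : nat -> R) T :
  (/ INR (S T) * sum_f_R0 f T) * (/ INR (S T) * sum_f_R0 f T) <= / INR (S T) * sum_f_R0 (fun t => f t * f t) T.
Proof.
  set (n := INR (S T)). assert (Hn : 0 < n) by (apply lt_0_INR; lia).
  set (m := / n * sum_f_R0 f T).
  assert (H : 0 <= sum_f_R0 (fun t => (f t - m) * (f t - m)) T) by (apply cond_pos_sum; intro t; apply Rle_0_sqr).
  rewrite (sum_eq _ (fun t => f t * f t + ((-2 * m) * f t + m * m))) in H by (intros; ring).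
  rewrite plus_sum, plus_sum, sum_cte in H.
  rewrite (sum_eq (fun i => -2 * m * f i) (fun i => f i * (-2 * m))), <- scal_sum in H by (intros; ring).
  fold n in H.
  assert (E : sum_f_R0 f T = n * m) by (unfold m; field; lra).
  rewrite E in H.
  assert (m * m * n <= sum_f_R0 (fun t => f t * f t) T) by nra.
  apply (Rmult_le_reg_l n); auto.
  replace (n * (/ n * sum_f_R0 (fun t => f t * f t) T)) with (sum_f_R0 (fun t => f t * f t) T) by (field; lra).
  nra.
Qed.

Section Ident.
Variable j : nat.
Variable u : rv.
Hypothesis Hu : forall k d, k <> j -> u k d = 0.
Hypothesis Hu0 : u 0%nat DL = 0.
Lemma Hsupp : supp j u.
Proof. intros k d Hk. apply Hu. lia. Qed.
Let x := xo p q r u.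
Let wv := wavg p q r u.
Definition cc := phi j * sa p q r u j.

Lemma ipN_Phi_x t M : (j + t <= M)%nat -> ipN M Phi (x t) = ipN j Phi u.
Proof.
  revert M. induction t; intros M HM.
  - unfold x, xo; simpl. rewrite (ipN_supp_r j M Phi u Hsupp); auto. lia.
  - rewrite (ipN_supp_r (j + S t) M Phi (x (S t))).
    2:{ apply (supp_x p q r j u Hsupp). } 2: lia.
    rewrite <- plus_n_Sm. unfold x, xo; simpl. rewrite ipN_Phi_U. apply IHt; lia.
    apply (supp_x p q r j u Hsupp).
Qed.
Lemma ipN_Phi_u : ipN j Phi u = cc.
Proof.
  unfold cc, ipN. destruct j as [|j'] eqn:Ej.
  - simpl. unfold loc, Phi, sa. fold am. ring.
  - simpl. rewrite (sum_eq _ (fun _ => 0)). rewrite sum_cte. unfold loc, Phi, sa. fold am. ring.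
    intros i Hi. unfold loc. rewrite !Hu by lia. ring.
Qed.
Lemma ipN_Phi_Ev M l : ipN M Phi (fun k d => Ev (fun s => x s k d) l) = Ev (fun s => ipN M Phi (x s)) l.
Proof.
  induction l as [|[a s] l IH].
  - unfold ipN. transitivity (sum_f_R0 (fun _ => 0) M). apply sum_eq; intros; unfold loc, Ev; simpl; ring.
    rewrite sum_cte; unfold Ev; simpl; ring.
  - rewrite ipN_sym. transitivity (ipN M (fun k d => a * x s k d + Ev (fun s => x s k d) l) Phi). reflexivity.
    rewrite ipN_lin, (ipN_sym M (x s) Phi), (ipN_sym M _ Phi), IH. reflexivity.
Qed.
Lemma in_avg s T : In s (map snd (avg T)) -> (s <= T)%nat.
Proof. unfold avg. rewrite map_map. rewrite (map_ext _ (fun t => t)) by reflexivity. rewrite map_id.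
  intros H. apply in_seq in H. lia. Qed.
Lemma ipN_Phi_w T M : (j + T <= M)%nat -> ipN M Phi (wv T) = cc.
Proof.
  intros HM. transitivity (ipN M Phi (fun k d => Ev (fun s => x s k d) (avg T))).
  { unfold ipN; apply sum_eq; intros; unfold loc, wv, wavg. rewrite !Ev_avg_sum. reflexivity. }
  rewrite ipN_Phi_Ev. rewrite (Ev_ext_in _ (fun _ => cc)).
  rewrite Ev_const. rewrite sumc_avg. ring.
  intros s Hs. apply in_avg in Hs. rewrite ipN_Phi_x by lia. apply ipN_Phi_u.
Qed.

Definition zz (k : nat) (d : Dir) : R :=
  proj1_sig (R_complete _ (cauchy_coord p q r Hp Hq0 Hr Hq' Hsum j u Hsupp Hu0 k d)).
Lemma Hz k d : Un_cv (fun T => wv T k d) (zz k d).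
Proof. unfold zz. destruct (R_complete _ _) as [l Hl]. simpl. exact Hl. Qed.

Definition G0 := Gx p q r j u 0 0.
Lemma x_bound t k d : Rabs (x t k d) <= sqrt G0.
Proof.
  assert (H : x t k d * x t k d <= G0).
  { destruct (Compare_dec.le_lt_dec k (j + t)) as [Hk|Hk].
    - eapply Rle_trans. apply (coord_le (j + t)); auto.
      unfold x; rewrite (Gx_eq p q r j u Hsupp (j + t) t t) by lia.
      assert (Hd : forall n, Gx p q r j u n n = G0).
      { unfold G0. clear Hk. induction n; auto. rewrite (Gx_sh p q r Hp Hq0 Hr Hq' Hsum j u Hsupp Hu0); auto. }
      rewrite Hd; lra.
    - unfold x; rewrite (supp_x p q r j u Hsupp t k d Hk). unfold G0.
      generalize (ipN_nonneg j u). unfold Gx, xo; simpl. rewrite !Nat.add_0_r. lra. }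
  rewrite <- sqrt_Rsqr_abs. apply sqrt_le_1_alt. unfold Rsqr; lra.
Qed.

Lemma Coin_cv (y : nat -> rv) (z : rv) k d :
  (forall d', Un_cv (fun n => y n k d') (z k d')) -> Un_cv (fun n => CoinR p q r (y n) k d) (CoinR p q r z k d).
Proof.
  intros H. unfold CoinR, sa.
  apply CV_minus; [|apply H]. apply CV_mult. apply cv_const.
  apply CV_plus. apply CV_plus. apply CV_mult. apply cv_const. apply H. apply CV_mult. apply cv_const. apply H.
  apply CV_mult. apply cv_const. apply H.
Qed.
Lemma U_cv (y : nat -> rv) (z : rv) k d :
  (forall k' d', Un_cv (fun n => y n k' d') (z k' d')) -> Un_cv (fun n => Ur p q r (y n) k d) (Ur p q r z k d).
Proof.
  intros H. unfold Ur, ShiftR. destruct d; [destruct k|..].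
  apply cv_const. all: apply Coin_cv; auto.
Qed.
Lemma U_sum (f : nat -> rv) c T k d :
  Ur p q r (fun k d => c * sum_f_R0 (fun s => f s k d) T) k d = c * sum_f_R0 (fun s => Ur p q r (f s) k d) T.
Proof.
  revert k d. induction T; intros k d.
  - simpl. transitivity (Ur p q r (fun k d => c * f 0%nat k d + (fun _ _ => 0) k d) k d).
    apply U_ext; intros; ring. rewrite U_lin.
    assert (Ur p q r (fun _ _ => 0) k d = 0) by (unfold Ur, ShiftR, CoinR, sa; destruct d; [destruct k|..]; ring).
    rewrite H; ring.
  - simpl. transitivity (Ur p q r (fun k d => c * f (S T) k d + (fun k d => c * sum_f_R0 (fun s => f s k d) T) k d) k d).
    apply U_ext; intros; ring. rewrite U_lin, IHT. ring.
Qed.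
Lemma zz_fixed k d : Ur p q r zz k d = zz k d.
Proof.
  apply (UL_sequence (fun T => Ur p q r (wv T) k d)).
  - apply U_cv. apply Hz.
  - apply (cv_ext (fun T => wv T k d + (x (S T) k d - x 0%nat k d) * / INR (S T))).
    { intros T. unfold wv, wavg. rewrite U_sum. fold x.
      rewrite (sum_eq (fun s => Ur p q r (x s) k d) (fun s => x (S s) k d)) by (intros; reflexivity).
      rewrite (sum_shift (fun s => x s k d)). simpl sum_f_R0. field. apply not_0_INR; lia. }
    rewrite <- Rplus_0_r. apply CV_plus. apply Hz.
    intros eps He.
    set (B0 := sqrt G0).
    assert (HB0 : 0 <= B0) by apply sqrt_pos.
    destruct (archimed_cor1 (eps / (2 * B0 + 1))) as [N [HN HN0]]. apply Rdiv_lt_0_compat; lra.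
    exists N. intros n Hn. unfold Rdist. rewrite Rminus_0_r.
    rewrite Rabs_mult, (Rabs_right (/ _)) by (left; apply Rinv_0_lt_compat, lt_0_INR; lia).
    assert (Rabs (x (S n) k d - x 0%nat k d) <= 2 * B0).
    { unfold Rminus. eapply Rle_trans. apply Rabs_triang. rewrite Rabs_Ropp.
      generalize (x_bound (S n) k d) (x_bound 0 k d). fold B0. lra. }
    assert (/ INR (S n) <= / INR N). { apply Rinv_le_contravar. apply lt_0_INR; lia. apply le_INR; lia. }
    assert (0 < / INR (S n)) by (apply Rinv_0_lt_compat, lt_0_INR; lia).
    assert (2 * B0 * / INR N <= 2 * B0 * (eps / (2 * B0 + 1))) by (apply Rmult_le_compat_l; lra).
    assert (2 * B0 * (eps / (2 * B0 + 1)) < eps).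
    { unfold Rdiv. rewrite <- Rmult_assoc. apply (Rmult_lt_reg_r (2 * B0 + 1)). lra.
      rewrite Rmult_assoc, Rinv_l by lra. nra. }
    generalize (Rabs_pos (x (S n) k d - x 0%nat k d)). nra.
Qed.

Definition alpha := sa p q r zz 0 / phi 0.
Lemma zz_fix' k d : ShiftR (CoinR p q r zz) k d = zz k d.
Proof. apply zz_fixed. Qed.
Lemma am_pos_L k : 0 < am (S k) DL.
Proof. unfold am; simpl. apply sqrt_lt_R0, Hq; lia. Qed.
Lemma am_pos_R k : 0 < am k DR.
Proof. unfold am; simpl. apply sqrt_lt_R0, Hp. Qed.
Lemma zzO k : zz k DO = am k DO * sa p q r zz k.
Proof. generalize (zz_fix' k DO). unfold ShiftR, CoinR. fold am. lra. Qed.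
Lemma zzR k : 2 * am (S k) DL * sa p q r zz (S k) - zz (S k) DL = zz k DR.
Proof. generalize (zz_fix' k DR). unfold ShiftR, CoinR. fold am. auto. Qed.
Lemma zzL k : 2 * am k DR * sa p q r zz k - zz k DR = zz (S k) DL.
Proof. generalize (zz_fix' (S k) DL). unfold ShiftR, CoinR. fold am. auto. Qed.
Lemma zz0 : zz 0%nat DL = 0.
Proof. rewrite <- zz_fix'. reflexivity. Qed.
Lemma s_form k : sa p q r zz k = alpha * phi k.
Proof.
  induction k.
  - unfold alpha. field. generalize (phi_pos 0); lra.
  - assert (H : am (S k) DL * sa p q r zz (S k) = am k DR * sa p q r zz k).
    { generalize (zzR k) (zzL k). lra. }
    rewrite IHk in H. generalize (phi_rec k) (am_pos_L k). intros Hr1 Hpos.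
    apply (Rmult_eq_reg_l (am (S k) DL)); [|lra]. rewrite H.
    transitivity (alpha * (am k DR * phi k)); [ring|]. rewrite <- Hr1. ring.
Qed.
Lemma zz_LR k : zz k DL = alpha * Phi k DL /\ zz k DR = alpha * Phi k DR.
Proof.
  induction k.
  - assert (H0 : zz 0%nat DL = alpha * Phi 0%nat DL) by (rewrite zz0, Phi0L; ring).
    split; auto.
    generalize (s_form 0) (zzO 0) (amp_sq p q r Hp Hr Hq' Hsum 0) (am_pos_R 0). fold am. intros h1 h2 h3 h4.
    rewrite h1 in h2. unfold sa in h1. fold am in h1. rewrite H0, h2 in h1. unfold Phi in *.
    apply (Rmult_eq_reg_l (am 0%nat DR)); [|lra].
    transitivity (alpha * phi 0 * (1 - am 0%nat DL * am 0%nat DL - am 0%nat DO * am 0%nat DO)). lra.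
    replace (1 - am 0%nat DL * am 0%nat DL - am 0%nat DO * am 0%nat DO) with (am 0%nat DR * am 0%nat DR) by lra. ring.
  - destruct IHk as [HL HR].
    assert (HL' : zz (S k) DL = alpha * Phi (S k) DL).
    { rewrite <- zzL, s_form, HR. unfold Phi. rewrite (Rmult_comm (phi (S k))), phi_rec. ring. }
    split; auto.
    generalize (s_form (S k)) (zzO (S k)) (amp_sq p q r Hp Hr Hq' Hsum (S k)) (am_pos_R (S k)). fold am. intros h1 h2 h3 h4.
    rewrite h1 in h2. unfold sa in h1. fold am in h1. rewrite HL', h2 in h1. unfold Phi in *.
    apply (Rmult_eq_reg_l (am (S k) DR)); [|lra].
    transitivity (alpha * phi (S k) * (1 - am (S k) DL * am (S k) DL - am (S k) DO * am (S k) DO)). lra.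
    replace (1 - am (S k) DL * am (S k) DL - am (S k) DO * am (S k) DO) with (am (S k) DR * am (S k) DR) by lra. ring.
Qed.
Lemma zz_form k d : zz k d = alpha * Phi k d.
Proof.
  destruct d. apply zz_LR. rewrite zzO, s_form. unfold Phi; ring. apply zz_LR.
Qed.

Lemma cv_ipN M (y : nat -> rv) (z : rv) :
  (forall k d, Un_cv (fun n => y n k d) (z k d)) -> Un_cv (fun n => ipN M (y n) (y n)) (ipN M z z).
Proof.
  intros H. assert (Hl : forall k, Un_cv (fun n => loc (y n) (y n) k) (loc z z k)).
  { intros k. unfold loc. repeat apply CV_plus; apply CV_mult; apply H. }
  induction M. apply Hl. unfold ipN in *; simpl. apply CV_plus; auto.
Qed.

Lemma alpha_eq : alpha = cc.
Proof.
  assert (Hall : forall delta, 0 < delta -> (cc - alpha) * (cc - alpha) <= delta).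
  { intros delta Hd.
    destruct (cauchy_vec p q r Hp Hq0 Hr Hq' Hsum j u Hsupp Hu0 delta Hd) as [N HN].
    set (e := fun k d => wv N k d - zz k d).
    assert (He : forall M', ipN M' e e <= delta).
    { intros M'. apply (cv_le_ev (fun S => ipN M' (fun k d => wv N k d - wv S k d) (fun k d => wv N k d - wv S k d)) _ N).
      apply cv_ipN. intros k d. apply CV_minus. apply cv_const. apply Hz.
      intros n Hn. apply HN; lia. }
    assert (Hb : forall M', (j + N <= M')%nat -> (cc - alpha * sum_f_R0 (pi_stat p q CR) M') * (cc - alpha * sum_f_R0 (pi_stat p q CR) M') <= delta).
    { intros M' HM.
      assert (E : ipN M' Phi e = cc - alpha * sum_f_R0 (pi_stat p q CR) M').
      { rewrite <- ipN_PhiPhi, <- (ipN_Phi_w N M' HM). unfold ipN. rewrite scal_sum, <- minus_sum.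
        apply sum_eq; intros. unfold e, loc. rewrite !zz_form. ring. }
      rewrite <- E. eapply Rle_trans. apply CS_ipN.
      rewrite ipN_PhiPhi. generalize (Psum_le M') (He M') (ipN_nonneg M' e) (cond_pos_sum (pi_stat p q CR) M' (fun k => Rlt_le _ _ (pi_pos k))).
      intros. nra. }
    apply (cv_le_ev (fun n => (cc - alpha * sum_f_R0 (pi_stat p q CR) (n + (j + N))) * (cc - alpha * sum_f_R0 (pi_stat p q CR) (n + (j + N)))) _ 0).
    - replace (cc - alpha) with (cc - alpha * 1) by ring.
      apply CV_mult; apply CV_minus; try apply cv_const; apply CV_mult; try apply cv_const;
        apply (cv_shift (sum_f_R0 (pi_stat p q CR))); apply Psum_cv.
    - intros n _. apply Hb. lia. }
  destruct (Req_dec alpha cc) as [|Hne]; auto. exfalso.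
  assert (0 < (cc - alpha) * (cc - alpha)).
  { assert (cc - alpha <> 0) by lra. nra. }
  specialize (Hall ((cc - alpha) * (cc - alpha) / 2) ltac:(lra)). lra.
Qed.
Lemma wv_limit i d : Un_cv (fun T => wv T i d) (cc * Phi i d).
Proof. rewrite <- alpha_eq, <- zz_form. apply Hz. Qed.
End Ident.

Definition reP (Psi : vec) : rv := fun k d => Cre (Psi k d).
Definition imP (Psi : vec) : rv := fun k d => Cim (Psi k d).
Lemma Uop_re Psi k d : Cre (Uop p q r Psi k d) = Ur p q r (reP Psi) k d.
Proof. unfold Uop, Shift, Coin, PiA, inner_a, Ur, ShiftR, CoinR, sa, reP; destruct d; [destruct k|..]; simpl; ring. Qed.
Lemma Uop_im Psi k d : Cim (Uop p q r Psi k d) = Ur p q r (imP Psi) k d.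
Proof. unfold Uop, Shift, Coin, PiA, inner_a, Ur, ShiftR, CoinR, sa, imP; destruct d; [destruct k|..]; simpl; ring. Qed.
Lemma Upow_re t Psi : forall k d, Cre (Upow p q r t Psi k d) = Urp p q r t (reP Psi) k d.
Proof.
  induction t; intros k d. reflexivity.
  simpl. rewrite Uop_re. apply U_ext. intros; apply IHt.
Qed.
Lemma Upow_im t Psi : forall k d, Cim (Upow p q r t Psi k d) = Urp p q r t (imP Psi) k d.
Proof.
  induction t; intros k d. reflexivity.
  simpl. rewrite Uop_im. apply U_ext. intros; apply IHt.
Qed.

Lemma comp_lim (j0 : nat) (w : rv) (Hw : forall k d, k <> j0 -> w k d = 0) (Hw0 : w 0%nat DL = 0) (i : nat) (d : Dir) :
  { L | Un_cv (fun T => / INR (S T) * sum_f_R0 (fun s => xo p q r w s i d * xo p q r w s i d) T) L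
        /\ L >= (cc j0 w * Phi i d) * (cc j0 w * Phi i d) }.
Proof.
  destruct (R_complete _ (cauchy_sq p q r Hp Hq0 Hr Hq' Hsum j0 w (Hsupp j0 w Hw) Hw0 i d)) as [L HL].
  exists L. split; auto. apply Rle_ge.
  apply (@Rle_cv_lim (fun T => wavg p q r w T i d * wavg p q r w T i d)
                     (fun T => / INR (S T) * sum_f_R0 (fun s => xo p q r w s i d * xo p q r w s i d) T)).
  intros n. unfold wavg. apply (jensen (fun s => xo p q r w s i d)).
  apply CV_mult; apply (wv_limit j0 w Hw Hw0). exact HL.
Qed.

Lemma main_lemma j bL bO bR : (j = 0%nat -> bL = C0) -> forall i, exists l,
  Un_cv (cesaro p q r (init j bL bO bR) i) l /\ l >= Cnorm2 (inner_a p q r j (init j bL bO bR)) * pi_stat p q CR i * pi_stat p q CR j.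
Proof.
  intros H0 i.
  set (Psi := init j bL bO bR).
  set (u := reP Psi). set (v := imP Psi).
  assert (Hu : forall k d, k <> j -> u k d = 0).
  { intros k d Hk. unfold u, reP, Psi, init. apply Nat.eqb_neq in Hk. rewrite Hk. reflexivity. }
  assert (Hv : forall k d, k <> j -> v k d = 0).
  { intros k d Hk. unfold v, imP, Psi, init. apply Nat.eqb_neq in Hk. rewrite Hk. reflexivity. }
  assert (Hu0 : u 0%nat DL = 0 /\ v 0%nat DL = 0).
  { unfold u, v, reP, imP, Psi, init. destruct j. rewrite H0 by auto. simpl; auto. simpl; auto. }
  destruct Hu0 as [Hu0 Hv0].
  destruct (comp_lim j u Hu Hu0 i DL) as [L1 [C1 B1]].
  destruct (comp_lim j u Hu Hu0 i DO) as [L2 [C2 B2]].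
  destruct (comp_lim j u Hu Hu0 i DR) as [L3 [C3 B3]].
  destruct (comp_lim j v Hv Hv0 i DL) as [L4 [C4 B4]].
  destruct (comp_lim j v Hv Hv0 i DO) as [L5 [C5 B5]].
  destruct (comp_lim j v Hv Hv0 i DR) as [L6 [C6 B6]].
  exists (L1 + L2 + L3 + (L4 + L5 + L6)). split.
  - eapply cv_ext. 2: apply CV_plus; [apply CV_plus; [apply CV_plus; [exact C1|exact C2]|exact C3]|
                                    apply CV_plus; [apply CV_plus; [exact C4|exact C5]|exact C6]].
    intros T. simpl. unfold cesaro. rewrite <- !Rmult_plus_distr_l, <- !plus_sum. f_equal.
    apply sum_eq. intros t _. unfold prob, Cnorm2. rewrite !Upow_re, !Upow_im. fold Psi u v.
    unfold xo. ring.
  - assert (E : Cnorm2 (inner_a p q r j Psi) = sa p q r u j * sa p q r u j + sa p q r v j * sa p q r v j).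
    { unfold Cnorm2, inner_a, Cadd, Cscal, sa, u, v, reP, imP. simpl. ring. }
    fold Psi. rewrite E.
    assert (Eu : forall w, cc j w * cc j w = pi_stat p q CR j * (sa p q r w j * sa p q r w j)).
    { intros w. unfold cc. transitivity (phi j * phi j * (sa p q r w j * sa p q r w j)). ring.
      unfold phi. rewrite sqrt_sqrt. auto. left; apply pi_pos. }
    assert (Hl := loc_Phi i). unfold loc in Hl.
    assert (Hs : (cc j u * Phi i DL) * (cc j u * Phi i DL) + (cc j u * Phi i DO) * (cc j u * Phi i DO) + (cc j u * Phi i DR) * (cc j u * Phi i DR)
       + ((cc j v * Phi i DL) * (cc j v * Phi i DL) + (cc j v * Phi i DO) * (cc j v * Phi i DO) + (cc j v * Phi i DR) * (cc j v * Phi i DR))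
       = (sa p q r u j * sa p q r u j + sa p q r v j * sa p q r v j) * pi_stat p q CR i * pi_stat p q CR j).
    { transitivity ((cc j u * cc j u + cc j v * cc j v) *
         (Phi i DL * Phi i DL + Phi i DO * Phi i DO + Phi i DR * Phi i DR)). ring.
      rewrite Hl, !Eu. ring. }
    rewrite <- Hs. lra.
Qed.

Lemma avec_init j : avec p q r j = init j (mkCx (amp p q r j DL) 0) (mkCx (amp p q r j DO) 0) (mkCx (amp p q r j DR) 0).
Proof.
  apply functional_extensionality; intros k. apply functional_extensionality; intros d.
  unfold avec, init. destruct (Nat.eqb k j) eqn:E; [|reflexivity].
  apply Nat.eqb_eq in E; subst. destruct d; reflexivity.
Qed.

Lemma final_stmt :
  (forall (j : nat) (bL bO bR : Cx),
     (j = 0%nat -> bL = C0) ->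
     (r j = 0 -> bO = C0) ->
     Cnorm2 bL + Cnorm2 bO + Cnorm2 bR = 1 ->
     forall i : nat,
       exists l : R,
         Un_cv (cesaro p q r (init j bL bO bR) i) l /\
         l >= Cnorm2 (inner_a p q r j (init j bL bO bR))
               * pi_stat p q CR i * pi_stat p q CR j)
  /\
  (forall j i : nat,
     exists l : R, Un_cv (cesaro p q r (avec p q r j) i) l /\ l > 0).
Proof.
  split.
  - intros j bL bO bR H0 _ _ i. apply main_lemma; auto.
  - intros j i. rewrite avec_init.
    destruct (main_lemma j (mkCx (amp p q r j DL) 0) (mkCx (amp p q r j DO) 0) (mkCx (amp p q r j DR) 0)) with (i := i)
      as [l [Hl Hb]].
    { intros ->. unfold C0. simpl. rewrite Hq0, sqrt_0. reflexivity. }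
    exists l. split; auto.
    assert (E : Cnorm2 (inner_a p q r j (init j (mkCx (amp p q r j DL) 0) (mkCx (amp p q r j DO) 0) (mkCx (amp p q r j DR) 0))) = 1).
    { unfold Cnorm2, inner_a, init, Cadd, Cscal. rewrite Nat.eqb_refl. simpl.
      generalize (amp_sq p q r Hp Hr Hq' Hsum j). simpl. intros H. rewrite Rplus_assoc in H. rewrite H. ring. }
    rewrite E in Hb. generalize (pi_pos i) (pi_pos j). intros. nra.
Qed.
End Final.

Theorem theorem1 (p q r : nat -> R)
  (Hp : forall j, 0 < p j) (Hq0 : q 0%nat = 0)
  (Hq : forall j, (1 <= j)%nat -> 0 < q j)
  (Hr : forall j, 0 <= r j) (Hq' : forall j, 0 <= q j)
  (Hsum : forall j, p j + q j + r j = 1)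
  (CR : R) (HCR : infinite_sum (CR_term p q) CR) :
  (forall (j : nat) (bL bO bR : Cx),
     (j = 0%nat -> bL = C0) ->
     (r j = 0 -> bO = C0) ->
     Cnorm2 bL + Cnorm2 bO + Cnorm2 bR = 1 ->
     forall i : nat,
       exists l : R,
         Un_cv (cesaro p q r (init j bL bO bR) i) l /\
         l >= Cnorm2 (inner_a p q r j (init j bL bO bR))
               * pi_stat p q CR i * pi_stat p q CR j)
  /\
  (forall j i : nat,
     exists l : R, Un_cv (cesaro p q r (avec p q r j) i) l /\ l > 0).
Proof.
  apply final_stmt; assumption.
Qed.
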